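(* Let $E$ be a finite-dimensional real affine space and let $G(E)$ be the set of generalized affine functions on $E$, equipped with the topology of pointwise convergence. Then $G(E)$ is a compact Hausdorff space.
   Context: A generalized affine function on $E$ is a function $E\to\overline{\mathbb{R}}=\mathbb{R}\cup\{\pm\infty\}$ that is both convex and concave (extended-real-valued sense). The topology of pointwise convergence is the subspace topology from the product topology on $\overline{\mathbb{R}}^{E}$, with $\overline{\mathbb{R}}$ carrying its usual order topology. *)

(* Defs.v *)
From HB Require Import structures.
From mathcomp Require Import all_boot all_order all_algebra.
From mathcomp Require Import all_classical all_reals all_analysis.
Set Implicit Arguments. Unset Strict Implicit. Unset Printing Implicit Defensive.
Import Order.TTheory GRing.Theory Num.Theory.
Local Open Scope ring_scope.
Local Open Scope ereal_scope.

(* The finite-dimensional real affine space E is modelled (after choosing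
   an origin and a basis) as 'rV[R]_n, R a real number type. *)

(* Extended-real-valued convexity (Rockafellar): the epigraph
   {(x,t) in E x R | f x <= t} is a convex subset of E x R. *)
Definition econvex (R : realType) (n : nat) (f : 'rV[R]_n -> \bar R) : Prop :=
  forall (x y : 'rV[R]_n) (s t l : R), (0 <= l)%R -> (l <= 1)%R ->
    f x <= s%:E -> f y <= t%:E ->
    f ((1 - l) *: x + l *: y)%R <= ((1 - l) * s + l * t)%:E.

(* Extended-real-valued concavity: the hypograph
   {(x,t) in E x R | t <= f x} is a convex subset of E x R. *)
Definition econcave (R : realType) (n : nat) (f : 'rV[R]_n -> \bar R) : Prop :=
  forall (x y : 'rV[R]_n) (s t l : R), (0 <= l)%R -> (l <= 1)%R ->
    s%:E <= f x -> t%:E <= f y ->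
    ((1 - l) * s + l * t)%:E <= f ((1 - l) *: x + l *: y)%R.

Definition gen_affine (R : realType) (n : nat)
  : set {ptws 'rV[R]_n -> \bar R} :=
  [set f | econvex f /\ econcave f].
Arguments gen_affine R n : clear implicits.

(* Main.v *)
Require Import Defs.
From HB Require Import structures.
From mathcomp Require Import all_boot all_order all_algebra.
From mathcomp Require Import all_classical all_reals all_analysis.
From mathcomp Require Import lra ring.
Import Order.TTheory GRing.Theory Num.Theory.
Local Open Scope classical_set_scope.
Local Open Scope ring_scope.
Lemma ereal_compactT (R : realType) : compact [set: \bar R].
Proof.
have -> : [set: \bar R] = (@expand R) @` `[-1, 1]%classic.
  apply/seteqP; split => // x _; exists (contract x); last exact: contractK.
  rewrite /= in_itv /=; have := contract_le1 x; rewrite ler_norml => /andP[-> ->]//.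
apply: continuous_compact; last exact: segment_compact.
have H1 (z : R) : z \in `[-1, 1] -> `|z| <= 1.
  by rewrite in_itv /= ler_norml => /andP[a b]; rewrite a b.
apply/subspace_continuousP => r Ar B /=.
rewrite -nbhs_ballE => -[e /= e0 eB].
rewrite nbhs_simpl /=; exists e => //= y ry Ay; apply: eB.
rewrite /ball /= /ereal_ball !expandK ?inE ?H1//.
Qed.

Lemma closed_of (T : topologicalType) (A : set T) :
  (forall f, ~ A f -> exists B, nbhs f B /\ (forall g, B g -> ~ A g)) -> closed A.
Proof.
move=> H f cf; apply: contrapT => nAf; have [B [nB HB]] := H f nAf.
by have [g [Ag Bg]] := cf B nB; exact: HB g Bg Ag.
Qed.

Section nb.
Variables (R : realType) (U : eqType).
Local Open Scope ereal_scope.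

Lemma nbhs_lt (f : {ptws U -> \bar R}) x a : f x < a -> nbhs f [set g : {ptws U -> \bar R} | g x < a].
Proof.
move=> fxa; have := @proj_continuous U (fun _ => \bar R) x f.
move=> /(_ [set u | u < a]); apply.
exact: open_ereal_lt'.
Qed.

Lemma nbhs_gt (f : {ptws U -> \bar R}) x a : a < f x -> nbhs f [set g : {ptws U -> \bar R} | a < g x].
Proof.
move=> fxa; have := @proj_continuous U (fun _ => \bar R) x f.
move=> /(_ [set u | a < u]); apply.
exact: open_ereal_gt'.
Qed.
End nb.

Lemma gap_lt (R : realType) (r : R) (w : \bar R) : (r%:E < w)%E -> exists2 e, 0 < e & ((r + e)%:E < w)%E.
Proof.
case: w => [w||] //= rw.
  exists ((w - r) / 2); first by rewrite divr_gt0 // subr_gt0 -lte_fin.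
  rewrite lte_fin in rw; rewrite lte_fin; lra.
by exists 1 => //; rewrite ltry.
Qed.

Lemma gap_gt (R : realType) (r : R) (w : \bar R) : (w < r%:E)%E -> exists2 e, 0 < e & (w < (r - e)%:E)%E.
Proof.
case: w => [w||] //= rw.
  exists ((r - w) / 2); first by rewrite divr_gt0 // subr_gt0 -lte_fin.
  rewrite lte_fin in rw; rewrite lte_fin; lra.
by exists 1 => //; rewrite ltNyr.
Qed.

Local Open Scope ereal_scope.
Lemma closed_econvex (R : realType) n :
  closed [set f : {ptws 'rV[R]_n -> \bar R} | econvex f].
Proof.
apply: closed_of => f nf; apply: contrapT => Hno; apply: nf.
move=> x y s t l l0 l1 fx fy; rewrite leNgt; apply/negP => lt.
have [e e0 he] := gap_lt _ _ _ lt.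
apply: Hno.
exists ([set g : {ptws 'rV[R]_n -> \bar R} | g x < (s + e)%:E] `&`
        ([set g : {ptws 'rV[R]_n -> \bar R} | g y < (t + e)%:E] `&`
         [set g : {ptws 'rV[R]_n -> \bar R} | ((1 - l) * s + l * t + e)%:E < g ((1 - l) *: x + l *: y)%R])).
split.
  apply: filterI; first by apply: nbhs_lt; apply: (le_lt_trans fx); rewrite lte_fin ltrDl.
  apply: filterI; first by apply: nbhs_lt; apply: (le_lt_trans fy); rewrite lte_fin ltrDl.
  exact: nbhs_gt.
move=> g [gx [gy gz]] cg.
have := cg x y (s + e)%R (t + e)%R l l0 l1 (ltW gx) (ltW gy).
have -> : ((1 - l) * (s + e) + l * (t + e) = (1 - l) * s + l * t + e)%R by ring.
by rewrite leNgt gz.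
Qed.

Lemma closed_econcave (R : realType) n :
  closed [set f : {ptws 'rV[R]_n -> \bar R} | econcave f].
Proof.
apply: closed_of => f nf; apply: contrapT => Hno; apply: nf.
move=> x y s t l l0 l1 fx fy; rewrite leNgt; apply/negP => lt.
have [e e0 he] := gap_gt _ _ _ lt.
apply: Hno.
exists ([set g : {ptws 'rV[R]_n -> \bar R} | (s - e)%:E < g x] `&`
        ([set g : {ptws 'rV[R]_n -> \bar R} | (t - e)%:E < g y] `&`
         [set g : {ptws 'rV[R]_n -> \bar R} | g ((1 - l) *: x + l *: y)%R < ((1 - l) * s + l * t - e)%:E])).
split.
  apply: filterI; first by apply: nbhs_gt; apply: (lt_le_trans _ fx); rewrite lte_fin ltrBlDr ltrDl.
  apply: filterI; first by apply: nbhs_gt; apply: (lt_le_trans _ fy); rewrite lte_fin ltrBlDr ltrDl.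
  exact: nbhs_lt.
move=> g [gx [gy gz]] cg.
have := cg x y (s - e)%R (t - e)%R l l0 l1 (ltW gx) (ltW gy).
have -> : ((1 - l) * (s - e) + l * (t - e) = (1 - l) * s + l * t - e)%R by ring.
by rewrite leNgt gz.
Qed.

Theorem theorem2 (R : realType) (n : nat) :
  compact (gen_affine R n) /\ hausdorff_space (subspace (gen_affine R n)).
Proof.
split; last first.
  apply: subspace_hausdorff; apply: hausdorff_product => _; exact: ereal_hausdorff.
apply: (@subclosed_compact _ _ [set: {ptws 'rV[R]_n -> \bar R}]).
- have -> : gen_affine R n = [set f : {ptws 'rV[R]_n -> \bar R} | econvex f] `&`
                            [set f : {ptws 'rV[R]_n -> \bar R} | econcave f] by [].
  apply: closedI; [exact: closed_econvex | exact: closed_econcave].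
- have := @tychonoff _ (fun _ : 'rV[R]_n => \bar R) (fun _ => setT) (fun _ => ereal_compactT R).
  by congr compact; apply/seteqP; split.
- by [].
Qed.
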